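(* Let $a_1,\dots,a_{m-1},c,b_1,\dots,b_{m-1}\in\mathbb C$ and $\bar u_2=y_1(a_1)\cdots y_{m-1}(a_{m-1})y_m(c)y_{m-1}(b_{m-1})\cdots y_1(b_1)$. Then for every $1\le l\le m-1$, $$r_l(\bar u_2):=\sum_{k=0}^{l}(-1)^k p_{l-k}(\bar u_2)\,p_{2m-1-l+k}(\bar u_2)=(a_1\cdots a_l)^2\,a_{l+1}\cdots a_{m-1}\,c\,b_{m-1}\cdots b_{l+1},$$ and consequently, when all $a_i,c,b_i$ are nonzero, $\dfrac{p_{l+1}p_{2m-1-l}}{r_l}(\bar u_2)$ equals $a_{l+1}+b_{l+1}$ if $l\le m-2$ and equals $c$ if $l=m-1$.
   Context: $m\ge2$. $E_{i,j}$ are the $2m\times2m$ matrix units; $f_i=E_{i+1,i}+E_{2m-i+1,2m-i}$ for $1\le i\le m-1$, $f_m=E_{m+1,m}$, $y_i(a)=\exp(af_i)$. For a $2m\times 2m$ matrix $g$, $p_k(g)=g_{2m,2m-k}$ for $0\le k\le 2m-1$. Empty products equal $1$. *)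

(* Defs.v *)
(* Matrices of size 2m over a characteristic-0 algebraically
   closed numeric field R (e.g. algC). Indices are 1-based as in
   the paper. *)
From HB Require Import structures.
From mathcomp Require Import all_boot all_order all_algebra.
Unset Printing Implicit Defensive.
Import Order.TTheory GRing.Theory Num.Theory.
Local Open Scope ring_scope.

Section Defs.
Variable R : numClosedFieldType.

Definition Eu (m i j : nat) : 'M[R]_(m.*2) :=
  \matrix_(r, s) ((r.+1 == i)%N && (s.+1 == j)%N)%:R.

Definition fgen (m i : nat) : 'M[R]_(m.*2) :=
  if i == m then Eu m (m + 1)%N m
  else Eu m (i + 1)%N i + Eu m (m.*2 - i + 1)%N (m.*2 - i)%N.

Definition mxpow (n : nat) (A : 'M[R]_n) (k : nat) : 'M[R]_n :=
  iter k (mulmx A) 1%:M.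

(* exponential of an n x n matrix, as the exponential series truncated at
   degree n; this equals exp(A) for every nilpotent A (A^n = 0), which is
   the case for all the a f_i used here. *)
Definition expmx (n : nat) (A : 'M[R]_n) : 'M[R]_n :=
  \sum_(k < n.+1) (k`!%:R)^-1 *: mxpow n A k.

Definition ygen (m i : nat) (a : R) : 'M[R]_(m.*2) := expmx (m.*2) (a *: fgen m i).

Definition ent (n : nat) (g : 'M[R]_n) (i j : nat) : R :=
  match i, j with
  | i'.+1, j'.+1 =>
    match @insub _ (fun k => k < n)%N 'I_n i', @insub _ (fun k => k < n)%N 'I_n j' with
    | Some i0, Some j0 => g i0 j0
    | _, _ => 0
    end
  | _, _ => 0
  end.

Definition pk (m k : nat) (g : 'M[R]_(m.*2)) : R := ent (m.*2) g (m.*2) (m.*2 - k)%N.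

Definition ubar2 (m : nat) (a : nat -> R) (c : R) (b : nat -> R) : 'M[R]_(m.*2) :=
  foldr (fun i acc => ygen m i (a i) *m acc) 1%:M (iota 1 m.-1)
  *m ygen m m c
  *m foldr (fun i acc => ygen m i (b i) *m acc) 1%:M (rev (iota 1 m.-1)).

Definition rl (m l : nat) (g : 'M[R]_(m.*2)) : R :=
  \sum_(k < l.+1) (-1) ^+ k * pk m (l - k)%N g * pk m (m.*2 - 1 - l + k)%N g.

End Defs.
Arguments Eu {R} m i j.
Arguments fgen {R} m i.
Arguments mxpow {R n} A k.
Arguments expmx {R n} A.
Arguments ygen {R} m i a.
Arguments ent {R n} g i j.
Arguments pk {R} m k g.
Arguments ubar2 {R} m a c b.
Arguments rl {R} m l g.

(* Main.v *)
Require Import Defs.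
From HB Require Import structures.
From mathcomp Require Import all_boot all_order all_algebra.
From mathcomp Require Import zify ring.
Import Order.TTheory GRing.Theory Num.Theory.
Local Open Scope ring_scope.

Section Aux.
Variables (R : numClosedFieldType) (m : nat).
Local Notation n := (m.*2).

Lemma ent_ord (g : 'M[R]_n) (i j : 'I_n) : ent g i.+1 j.+1 = g i j.
Proof.
rewrite /ent.
case: (@insubP _ (fun k => (k < n)%N) 'I_n i) => [i0 _ Hi|]; last by rewrite ltn_ord.
case: (@insubP _ (fun k => (k < n)%N) 'I_n j) => [j0 _ Hj|]; last by rewrite ltn_ord.
by congr (g _ _); apply: val_inj.
Qed.

Lemma ent_out (g : 'M[R]_n) r j :
  ~~ ((0 < r <= n) && (0 < j <= n))%N -> ent g r j = 0.
Proof.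
rewrite /ent; case: r => [|r] //; case: j => [|j] //= H.
case: (@insubP _ (fun k => (k < n)%N) 'I_n r) => [i0 Hi _|] //.
case: (@insubP _ (fun k => (k < n)%N) 'I_n j) => [j0 Hj _|] //.
by move: H; rewrite Hi Hj.
Qed.

Lemma ent_in r j : (0 < r <= n)%N -> (0 < j <= n)%N ->
  exists (i0 j0 : 'I_n), r = i0.+1 /\ j = j0.+1.
Proof.
move=> Hr Hj.
have hr : (r.-1 < n)%N by lia.
have hj : (j.-1 < n)%N by lia.
exists (Ordinal hr), (Ordinal hj) => /=; split; lia.
Qed.

Lemma entD (g h : 'M[R]_n) r j : ent (g + h) r j = ent g r j + ent h r j.
Proof.
rewrite /ent; case: r => [|r]; first by rewrite addr0. case: j => [|j]; first by rewrite addr0.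
case: (insub r : option 'I_n) => [i0|]; last by rewrite addr0.
case: (insub j : option 'I_n) => [j0|]; last by rewrite addr0.
by rewrite mxE.
Qed.

Lemma entZ (g : 'M[R]_n) x r j : ent (x *: g) r j = x * ent g r j.
Proof.
rewrite /ent; case: r => [|r]; first by rewrite mulr0. case: j => [|j]; first by rewrite mulr0.
case: (insub r : option 'I_n) => [i0|]; last by rewrite mulr0.
case: (insub j : option 'I_n) => [j0|]; last by rewrite mulr0.
by rewrite mxE.
Qed.

Lemma entM_Eu (g : 'M[R]_n) r j p q : (0 < p <= n)%N -> (0 < q <= n)%N ->
  ent (g *m Eu m p q) r j = if j == q then ent g r p else 0.
Proof.
move=> Hp Hq.
case: (boolP ((0 < r <= n) && (0 < j <= n))%N) => H; last first.
  rewrite ent_out //; case: eqP => // ejq; rewrite ent_out //.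
  move: H; rewrite ejq; lia.
move/andP: H => [Hr Hj].
have [i0 [j0 [-> ->]]] := ent_in _ _ Hr Hj.
have [p0 [_ [ep _]]] := ent_in _ _ Hp Hp.
rewrite ent_ord ep ent_ord mxE (bigD1 p0) //= big1 => [|k kp]; last first.
  rewrite mxE; case: eqP => [e|]; last by rewrite mulr0.
  by move: kp; rewrite -(inj_eq val_inj) /= -eqSS e eqxx.
rewrite mxE eqxx /= addr0; case: eqP => _; by rewrite ?mulr1 ?mulr0.
Qed.

Lemma Eu_mul0 p q p' q' : q != p' -> Eu m p q *m Eu m p' q' = 0 :> 'M[R]_n.
Proof.
move=> H; apply/matrixP => i j; rewrite !mxE big1 // => k _.
rewrite !mxE; have [e|ne] := eqVneq k.+1 q; last by rewrite andbF mul0r.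
have [e'|ne'] := eqVneq k.+1 p'; last by rewrite /= mulr0.
by move: H; rewrite -e -e' eqxx.
Qed.

Lemma fgen_sq i : (0 < i <= m)%N -> fgen m i *m fgen m i = 0 :> 'M[R]_n.
Proof.
move=> Hi; rewrite /fgen; case: eqP => [_|ne].
  by apply: Eu_mul0; apply/eqP; lia.
rewrite !mulmxDl !mulmxDr !Eu_mul0 ?addr0 //; apply/eqP; lia.
Qed.

Lemma mxpow_nil (A : 'M[R]_n) k : A *m A = 0 -> mxpow A k.+2 = 0.
Proof. by move=> H; rewrite /mxpow !iterS mulmxA H mul0mx. Qed.

Lemma expmx_nil (A : 'M[R]_n) : (0 < m)%N -> A *m A = 0 -> expmx A = 1%:M + A.
Proof.
move=> Hm H; rewrite /expmx -(big_mkord xpredT (fun k => (k`!%:R)^-1 *: mxpow A k)).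
rewrite (big_ltn (ltn0Sn _)) (big_ltn (_ : 1 < n.+1)%N); last by lia.
rewrite big_nat big1 => [|k /andP[k2 _]]; last first.
  case: k k2 => [|[|k]] // _; by rewrite mxpow_nil ?scaler0.
by rewrite /mxpow /= invr1 !scale1r mulmx1 addr0.
Qed.

Lemma ygenE i x : (0 < i <= m)%N -> ygen m i x = 1%:M + x *: fgen m i :> 'M[R]_n.
Proof.
move=> Hi; rewrite /ygen expmx_nil //; first lia.
by rewrite -scalemxAl -scalemxAr fgen_sq // !scaler0.
Qed.

Lemma ent_row_y (g : 'M[R]_n) i x j : (0 < i < m)%N ->
  ent (g *m ygen m i x) n j = ent g n j + x * ((if j == i then ent g n i.+1 else 0)
     + (if j == (n - i)%N then ent g n (n - i).+1 else 0)).
Proof.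
move=> Hi; rewrite ygenE; last lia.
rewrite mulmxDr mulmx1 entD -scalemxAr entZ /fgen.
have -> : (i == m) = false by apply/eqP; lia.
rewrite mulmxDr entD !entM_Eu ?addn1 //; try lia.
all: try (have -> : (n - i + 1 = (n - i).+1)%N by lia); done.
Qed.

Lemma ent_row_ym (g : 'M[R]_n) x j : (0 < m)%N ->
  ent (g *m ygen m m x) n j = ent g n j + x * (if j == m then ent g n m.+1 else 0).
Proof.
move=> Hm; rewrite ygenE; last lia.
rewrite mulmxDr mulmx1 entD -scalemxAr entZ /fgen eqxx entM_Eu ?addn1 //; lia.
Qed.

End Aux.
Section Prod.
Variables (R : numClosedFieldType) (m : nat) (hm : (2 <= m)%N) (a b : nat -> R) (c : R).
Local Notation n := (m.*2).

Definition Pf (F : nat -> R) (s : seq nat) : 'M[R]_n :=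
  foldr (fun i acc => ygen m i (F i) *m acc) 1%:M s.

Lemma Pf_cat F s1 s2 : Pf F (s1 ++ s2) = Pf F s1 *m Pf F s2.
Proof. elim: s1 => [|x s IH] /=; by rewrite ?mul1mx // IH mulmxA. Qed.

Lemma Pf_rcons F s x : Pf F (rcons s x) = Pf F s *m ygen m x (F x).
Proof. by rewrite -cats1 Pf_cat /= mulmx1. Qed.

Definition A k := \prod_(1 <= i < k.+1) a i.
Definition Bp s := \prod_(s <= i < m) b i.

Lemma ent_id j : ent (1%:M : 'M[R]_n) n j = if j == n then 1 else 0.
Proof.
case: (boolP (0 < j <= n)%N) => Hj; last first.
  rewrite ent_out; last by move: Hj; lia.
  by case: eqP => // e; move: Hj; rewrite e; lia.
have Hn : (0 < n <= n)%N by lia.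
have [i0 [j0 [ei ej]]] := ent_in m n j Hn Hj.
have -> : ent (1%:M : 'M[R]_n) n j = ent (1%:M : 'M[R]_n) i0.+1 j0.+1 by rewrite -ei -ej.
rewrite ent_ord mxE.
have -> : (j == n) = (j0 == i0).
  apply/eqP/eqP => e; first by apply: val_inj => /=; lia.
  by rewrite ej e -ei.
by rewrite eq_sym; case: eqP.
Qed.

Lemma Pa_ent k j : (k < m)%N ->
  ent (Pf a (iota 1 k)) n j = if (n - k <= j <= n)%N then A (n - j) else 0.
Proof.
elim: k j => [|k IH] j Hk.
  rewrite /= ent_id subn0; case: eqP => [->|ne].
    by rewrite leqnn subnn /A big_geq.
  by case: ifP => // H; case: ne; lia.
rewrite (_ : iota 1 k.+1 = iota 1 k ++ [:: k.+1]); last by rewrite -[in LHS](addn1 k) iotaD add1n.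
rewrite Pf_cat /= mulmx1 ent_row_y; last lia.
rewrite !IH; try lia.
have -> : (n - k <= k.+2 <= n)%N = false by lia.
have -> : (n - k <= (n - k.+1).+1 <= n)%N by lia.
have -> : (n - (n - k.+1).+1 = k)%N by lia.
rewrite if_same add0r; case: eqP => [->|ne2].
  have -> : (n - k <= n - k.+1)%N = false by lia.
  rewrite leq_subr leqnn /= add0r subKn; last lia.
  by rewrite /A [in RHS]big_nat_recr //= mulrC.
rewrite mulr0 addr0; case: ifP; case: ifP => //; lia.
Qed.


Definition M0 := Pf a (iota 1 (m - 1)) *m ygen m m c.

Lemma M0_ent j : ent M0 n j =
  if (n - (m - 1) <= j <= n)%N then A (n - j) else if j == m then c * A (m - 1) else 0.
Proof.
rewrite /M0 ent_row_ym; last lia.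
rewrite !Pa_ent; try lia.
have -> : (n - (m - 1) <= m.+1 <= n)%N by lia.
have -> : (n - m.+1 = m - 1)%N by lia.
case: eqP => [->|ne].
  have -> : (n - (m - 1) <= m <= n)%N = false by lia.
  by rewrite add0r.
by rewrite mulr0 addr0.
Qed.

Definition Qb k := Pf b (rev (iota (m - k) k)).

Lemma Qb_S k : (k < m)%N -> Qb k.+1 = Qb k *m ygen m (m - k.+1) (b (m - k.+1)).
Proof.
move=> Hk; rewrite /Qb -Pf_rcons; congr Pf.
have e : (m - k = (m - k.+1).+1)%N by lia.
by rewrite e /= rev_cons.
Qed.

Lemma V_ent k j : (k <= m - 1)%N ->
  ent (M0 *m Qb k) n j =
  if (n - m < j <= n)%N then A (n - j) + (if (m - k <= n - j)%N then b (n - j) * A (n - j).-1 else 0)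
  else if (m - k <= j <= m)%N then c * A (m - 1) * Bp j else 0.
Proof.
elim: k j => [|k IH] j Hk.
  rewrite /Qb subn0 /= mulmx1 M0_ent.
  case: ifP => H1.
    have -> : (n - m < j <= n)%N by lia.
    have -> : (m <= n - j)%N = false by lia.
    by rewrite addr0.
  case: eqP => [->|ne].
    have -> : (n - m < m <= n)%N = false by lia.
    by rewrite leqnn /Bp big_geq // mulr1.
  case: ifP => H2; first lia.
  by case: ifP => // H3; case: ne; lia.
rewrite Qb_S; last lia.
rewrite mulmxA ent_row_y; last lia.
rewrite !IH; try lia.
set i := (m - k.+1)%N.
have -> : (n - m < i.+1 <= n)%N = false by lia.
have -> : (m - k <= i.+1 <= m)%N by lia.
have -> : (n - m < (n - i).+1 <= n)%N by lia.
have -> : (m - k <= n - (n - i).+1)%N = false by lia.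
have -> : (n - (n - i).+1 = i.-1)%N by lia.
case: eqP => [->|ne].
  have -> : (n - m < i <= n)%N = false by lia.
  have -> : (m - k <= i <= m)%N = false by lia.
  have -> : (i == n - i)%N = false by apply/eqP; lia.
  have -> : (m - k.+1 <= i <= m)%N by lia.
  rewrite add0r addr0 /Bp (big_ltn (_ : i < m)%N); last lia.
  have -> : i.+1 = (m - k)%N by lia.
  by rewrite mulrCA mulrA.
rewrite add0r; case: eqP => [->|ne2].
  have -> : (n - m < n - i <= n)%N by lia.
  have -> : (m - k <= n - (n - i))%N = false by lia.
  have -> : (n - (n - i) = i)%N by lia.
  have -> : (m - k.+1 <= i)%N by lia.
  by rewrite !addr0.
rewrite [b i * _]mulr0 addr0.
have -> : (i <= n - j)%N = (m - k <= n - j)%N.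
  apply/idP/idP; [move=> H; apply/negPn/negP => H'; case: ne2 | ]; lia.
have -> : (i <= j <= m)%N = (m - k <= j <= m)%N.
  apply/idP/idP; [move=> H; apply/negPn/negP => H'; case: ne | ]; lia.
done.
Qed.

End Prod.
Arguments M0 {R}. Arguments Qb {R}. Arguments A {R}. Arguments Bp {R}. Arguments Pf {R}.
Lemma tele (R : comPzRingType) (p q T : nat -> R) L :
  p 0%N * q 1%N = T 0%N ->
  (forall l, (l < L)%N -> p l.+1 * q l.+2 = T l.+1 + T l) ->
  forall l, (l <= L)%N -> \sum_(k < l.+1) (-1) ^+ k * p (l - k)%N * q (l - k).+1 = T l.
Proof.
move=> H0 HS; elim => [|l IH] Hl.
  by rewrite big_ord1 /= expr0 mul1r.
rewrite big_ord_recl /= expr0 mul1r subn0.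
under eq_bigr => i _ do rewrite /bump /= add1n subSS exprS mulN1r !mulNr.
rewrite sumrN IH; last lia.
by rewrite HS // addrK.
Qed.

Section Main.
Variables (R : numClosedFieldType) (m : nat) (hm : (2 <= m)%N) (a b : nat -> R) (c : R).
Local Notation n := (m.*2).
Local Notation u := (ubar2 m a c b).

Lemma u_eq : u = M0 m a c *m Qb m b (m - 1).
Proof.
rewrite /ubar2 /M0 /Qb /Pf -subn1.
by have -> : (m - (m - 1) = 1)%N by lia.
Qed.

Lemma pk_low k : (k <= m - 1)%N ->
  pk m k u = A a k + (if (1 <= k)%N then b k * A a k.-1 else 0).
Proof.
move=> Hk; rewrite /pk u_eq V_ent //.
have -> : (n - m < n - k <= n)%N by lia.
have -> : (n - (n - k) = k)%N by lia.
by have -> : (m - (m - 1) = 1)%N by lia.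
Qed.

Lemma pk_high k : (m <= k <= n - 1)%N ->
  pk m k u = c * A a (m - 1) * Bp m b (n - k).
Proof.
move=> Hk; rewrite /pk u_eq V_ent //.
have -> : (n - m < n - k <= n)%N = false by lia.
by have -> : (m - (m - 1) <= n - k <= m)%N by lia.
Qed.


Lemma rl_eq l : (l <= m - 1)%N ->
  rl m l u = A a l * Bp m b l.+1 * (c * A a (m - 1)).
Proof.
move=> Hl; rewrite /rl.
rewrite (eq_bigr (fun k : 'I_l.+1 => (-1) ^+ k * pk m (l - k)%N u * pk m (n - (l - k).+1)%N u)); last first.
  move=> k _; have Hk := ltn_ord k.
  by have -> : (n - 1 - l + k = n - (l - k).+1)%N by lia.
apply: (@tele _ (fun s => pk m s u) (fun s => pk m (n - s)%N u)
         (fun l => A a l * Bp m b l.+1 * (c * A a (m - 1))) (m - 1)%N) => //.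
  rewrite pk_low // pk_high; last lia.
  have -> : (n - (n - 1) = 1)%N by lia.
  by rewrite /= /A big_geq // addr0; ring.
move=> k Hk; rewrite pk_low; last lia.
rewrite pk_high; last lia.
have -> : (n - (n - k.+2) = k.+2)%N by lia.
rewrite /= [Bp m b k.+1]/Bp (big_ltn (_ : k.+1 < m)%N); last lia.
rewrite -/(Bp m b k.+2); ring.
Qed.

End Main.

Lemma prod_nz (R : numClosedFieldType) (F : nat -> R) i0 i1 :
  (forall i, (i0 <= i < i1)%N -> F i != 0) -> \prod_(i0 <= i < i1) F i != 0.
Proof.
move=> H; rewrite big_nat_cond; apply: (big_ind (fun x : R => x != 0)) => [|x y|i /andP[Hi _]].
- exact: oner_neq0.
- exact: mulf_neq0.
- exact: H.
Qed.

Theorem mainTheorem7 (R : numClosedFieldType) (m : nat) (hm : (2 <= m)%N)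
    (a : nat -> R) (c : R) (b : nat -> R) (l : nat)
    (hl1 : (1 <= l)%N) (hl2 : (l <= m - 1)%N) :
  let u := ubar2 m a c b in
  rl m l u =
    (\prod_(1 <= i < l.+1) a i) ^+ 2 * (\prod_(l.+1 <= i < m) a i) * c
      * (\prod_(l.+1 <= i < m) b i)
  /\ ((forall i, (1 <= i <= m - 1)%N -> a i != 0 /\ b i != 0) -> c != 0 ->
      pk m l.+1 u * pk m (m.*2 - 1 - l)%N u / rl m l u =
        (if (l <= m - 2)%N then a l.+1 + b l.+1 else c)).
Proof.
move=> u.
have HA : A a (m - 1) = A a l * \prod_(l.+1 <= i < m) a i.
  rewrite /A; have -> : (m - 1).+1 = m by lia.
  rewrite (big_cat_nat (n := l.+1)) //; lia.
split.
  rewrite /u rl_eq // HA /Bp /A. ring.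
move=> Hab hc.
have nzA : forall k, (k <= m - 1)%N -> A a k != 0.
  move=> k Hk; apply: prod_nz => i Hi; have [] := Hab i; [lia | done].
have nzB : Bp m b l.+1 != 0.
  apply: prod_nz => i Hi; have [] := Hab i; [lia | done].
rewrite /u rl_eq // (@pk_high _ _ hm _ _ _ (m.*2 - 1 - l)%N); last lia.
have -> : (m.*2 - (m.*2 - 1 - l) = l.+1)%N by lia.
case: ifP => Hl2.
  rewrite pk_low //; last lia.
  have -> : A a l.+1 = A a l * a l.+1 by rewrite /A big_nat_recr.
  move: (nzA l hl2) (nzA (m - 1)%N (leqnn _)) => n1 n2.
  by rewrite /=; field; rewrite n1 n2 hc nzB.
have Hl3 := negbT Hl2. have el : l = (m - 1)%N by lia.
rewrite pk_high //; last lia.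
have -> : (m.*2 - l.+1 = m)%N by lia.
have -> : l.+1 = m by lia.
rewrite /Bp big_geq // mulr1 el.
move: (nzA (m - 1)%N (leqnn _)) => n2.
  by field; rewrite n2 hc.
Qed.
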